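(* Let $G$ be a localic group. There is an isomorphism of categories $Cmd_0(G)\cong\mathcal{R}el(\beta^G)$ making the triangle with the forgetful functors $T:Cmd_0(G)\to s\ell_0=\mathcal{R}el$ and $\mathcal{R}el(F):\mathcal{R}el(\beta^G)\to\mathcal{R}el$ commute. Moreover, the identification between relations $R\subseteq X\times X'$ and linear maps $\ell X\to\ell X'$ lifts to this isomorphism.
   Context: A localic group is a group object in $Loc^{op}$, equivalently a (commutative) Hopf algebra in the monoidal category $s\ell$ of sup-lattices whose underlying algebra is a locale (multiplication $\wedge$, unit $1$), with comultiplication $w$, counit $e$, antipode $\iota$. For a set $X$, $\ell X$ is its power set; $s\ell_0$ is the full subcategory of sup-lattices $\ell X$, isomorphic to the category $\mathcal{R}el$ of sets and relations. $Cmd_0(G)$ is the category of $G$-comodules $\rho:\ell X\to G\otimes\ell X$ (satisfying $(G\otimes\rho)\rho=(w\otimes\ell X)\rho$ and $(e\otimes\ell X)\rho\cong\mathrm{id}$) with comodule morphisms. For a set $X$, $Aut(X)$ is the universal locale with an $\ell$-bijection $X\times X\to Aut(X)$, $(x,y)\mapsto\langle x|y\rangle$ (where an $\ell$-bijection $\lambda$ satisfies $\bigvee_y\lambda(x,y)=1$, $\lambda(x,y_1)\wedge\lambda(x,y_2)=0$ for $y_1\ne y_2$, and the two symmetric conditions), a localic group with $w\langle x|y\rangle=\bigvee_z\langle x|z\rangle\otimes\langle z|y\rangle$, $e\langle x|y\rangle=\delta_{x=y}$, $\iota\langle x|y\rangle=\langle y|x\rangle$. $\beta^G$ is the category of sets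 $X$ with an action, i.e. a Hopf algebra morphism $Aut(X)\to G$ (equivalently an $\ell$-bijection $\mu:X\times X\to G$ with $w\mu=(\mu\otimes\mu)w$, $e\mu=e$, $\mu\iota=\iota\mu$), morphisms being functions $f$ with $\mu(a,b)\le\mu'(f(a),f(b))$; $F:\beta^G\to\mathcal{E}ns$ is forgetful and $\mathcal{R}el(\beta^G)$ its category of relations. *)

(* Defs.v *)
Record Locale := {
  L_car :> Type;
  L_le : L_car -> L_car -> Prop;
  L_sup : (L_car -> Prop) -> L_car;
  L_meet : L_car -> L_car -> L_car;
  L_top : L_car;
  L_le_refl : forall a, L_le a a;
  L_le_trans : forall a b c, L_le a b -> L_le b c -> L_le a c;
  L_le_antisym : forall a b, L_le a b -> L_le b a -> a = b;
  L_sup_ub : forall (U : L_car -> Prop) a, U a -> L_le a (L_sup U);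
  L_sup_least : forall (U : L_car -> Prop) b,
      (forall a, U a -> L_le a b) -> L_le (L_sup U) b;
  L_meet_glb : forall a b c, L_le c (L_meet a b) <-> (L_le c a /\ L_le c b);
  L_top_greatest : forall a, L_le a L_top;
  L_distr : forall a (U : L_car -> Prop),
      L_meet a (L_sup U) = L_sup (fun y => exists u, U u /\ y = L_meet a u)
}.

Arguments L_le {_}. Arguments L_sup {_}. Arguments L_meet {_}. Arguments L_top {_}.

Definition L_bot (G : Locale) : G := L_sup (fun _ : G => False).

(* Tensor products of sup-lattices (Joyal--Tierney): the elements of   *)
(* G (x) G are the subsets of G x G that are down-closed and closed    *)
(* under joins in each variable separately; the order is inclusion,    *)
(* the join is the closure of the union, a (x) b is the closure of     *)
(* {(a,b)}.  For a locale G, the meet of G (x) G (its algebra          *)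
(* structure) is intersection and its top is G x G.  Similarly for     *)
(* G (x) G (x) G.                                                       *)
Definition tideal2 (G : Locale) (S : G -> G -> Prop) : Prop :=
  (forall a b a' b', S a b -> L_le a' a -> L_le b' b -> S a' b') /\
  (forall (U : G -> Prop) b, (forall a, U a -> S a b) -> S (L_sup U) b) /\
  (forall a (U : G -> Prop), (forall b, U b -> S a b) -> S a (L_sup U)).

Definition cl2 (G : Locale) (R : G -> G -> Prop) : G -> G -> Prop :=
  fun a b => forall S, tideal2 G S -> (forall x y, R x y -> S x y) -> S a b.

Definition tideal3 (G : Locale) (S : G -> G -> G -> Prop) : Prop :=
  (forall a b c a' b' c', S a b c -> L_le a' a -> L_le b' b -> L_le c' c ->
       S a' b' c') /\
  (forall (U : G -> Prop) b c, (forall a, U a -> S a b c) -> S (L_sup U) b c) /\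
  (forall a (U : G -> Prop) c, (forall b, U b -> S a b c) -> S a (L_sup U) c) /\
  (forall a b (U : G -> Prop), (forall c, U c -> S a b c) -> S a b (L_sup U)).

Definition cl3 (G : Locale) (R : G -> G -> G -> Prop) : G -> G -> G -> Prop :=
  fun a b c => forall S, tideal3 G S -> (forall x y z, R x y z -> S x y z) -> S a b c.

Definition teq2 {G : Locale} (S T : G -> G -> Prop) : Prop :=
  forall a b, S a b <-> T a b.
Definition teq3 {G : Locale} (S T : G -> G -> G -> Prop) : Prop :=
  forall a b c, S a b c <-> T a b c.

(* Localic group = (commutative) Hopf algebra in sup-lattices whose    *)
(* underlying algebra is the locale G:                                  *)
(*   w : G -> G (x) G   (w g a b  means  (a,b) belongs to w(g)),         *)
(*   e : G -> Omega     (Omega = Prop, the sup-lattice l(1)),            *)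
(* w, e, iota are locale (frame) morphisms (group object in Loc^op).    *)
Record IsLocalicGroup (G : Locale) (w : G -> G -> G -> Prop)
    (e : G -> Prop) (iota : G -> G) : Prop := {
  w_ideal : forall g, tideal2 G (w g);
  w_sup : forall U : G -> Prop,
      teq2 (w (L_sup U)) (cl2 G (fun a b => exists u, U u /\ w u a b));
  w_meet : forall g h, teq2 (w (L_meet g h)) (fun a b => w g a b /\ w h a b);
  w_top : teq2 (w L_top) (fun _ _ => True);
  (* coassociativity: (w (x) G) w = (G (x) w) w  in G (x) G (x) G *)
  w_coassoc : forall g,
      teq3 (cl3 G (fun a b c => exists u c0, w g u c0 /\ w u a b /\ L_le c c0))
           (cl3 G (fun a b c => exists a0 v, w g a0 v /\ w v b c /\ L_le a a0));
  e_sup : forall U : G -> Prop, e (L_sup U) <-> exists u, U u /\ e u;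
  e_meet : forall g h, e (L_meet g h) <-> e g /\ e h;
  e_top : e L_top;
  (* counit: (e (x) G) w = id = (G (x) e) w *)
  counit_l : forall g, L_sup (fun b => exists a, w g a b /\ e a) = g;
  counit_r : forall g, L_sup (fun a => exists b, w g a b /\ e b) = g;
  iota_sup : forall U : G -> Prop,
      iota (L_sup U) = L_sup (fun y => exists u, U u /\ y = iota u);
  iota_meet : forall g h, iota (L_meet g h) = L_meet (iota g) (iota h);
  iota_top : iota L_top = L_top;
  (* antipode: m (iota (x) G) w = u e = m (G (x) iota) w,  u : Omega -> G *)
  antipode_l : forall g,
      L_sup (fun x => exists a b, w g a b /\ x = L_meet (iota a) b)
      = L_sup (fun x => e g /\ x = L_top);
  antipode_r : forall g,
      L_sup (fun x => exists a b, w g a b /\ x = L_meet a (iota b))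
      = L_sup (fun x => e g /\ x = L_top)
}.

(* Cmd_0(G).  Using G (x) l X = G^X, a sup-lattice map                 *)
(* rho : l X -> G (x) l X  is a matrix  rho : X -> X -> G  with         *)
(* rho({x}) = \/_y rho x y (x) {y}.                                     *)
Definition is_coaction (G : Locale) (w : G -> G -> G -> Prop) (e : G -> Prop)
    (X : Type) (rho : X -> X -> G) : Prop :=
  (* (G (x) rho) rho = (w (x) l X) rho *)
  (forall x z, teq2 (w (rho x z))
                    (cl2 G (fun a b => exists y, a = rho x y /\ b = rho y z))) /\
  (* (e (x) l X) rho = id *)
  (forall x y, e (rho x y) <-> x = y).

(* A relation R ⊆ X × X' is the linear map l X -> l X', {x} |-> {x' | R x x'};
   it is a comodule morphism iff  rho' f_R = (G (x) f_R) rho. *)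
Definition is_comod_morph (G : Locale) (X X' : Type)
    (rho : X -> X -> G) (rho' : X' -> X' -> G) (R : X -> X' -> Prop) : Prop :=
  forall x y',
    L_sup (fun g => exists x', R x x' /\ g = rho' x' y')
    = L_sup (fun g => exists y, R y y' /\ g = rho x y).

Definition is_lbij (G : Locale) (X : Type) (mu : X -> X -> G) : Prop :=
  (forall x, L_sup (fun g => exists y, g = mu x y) = L_top) /\
  (forall x y1 y2, y1 <> y2 -> L_meet (mu x y1) (mu x y2) = L_bot G) /\
  (forall y, L_sup (fun g => exists x, g = mu x y) = L_top) /\
  (forall x1 x2 y, x1 <> x2 -> L_meet (mu x1 y) (mu x2 y) = L_bot G).

Definition is_action (G : Locale) (w : G -> G -> G -> Prop) (e : G -> Prop)
    (iota : G -> G) (X : Type) (mu : X -> X -> G) : Prop :=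
  is_lbij G X mu /\
  (forall x y, teq2 (w (mu x y))
                    (cl2 G (fun a b => exists z, a = mu x z /\ b = mu z y))) /\
  (forall x y, e (mu x y) <-> x = y) /\
  (forall x y, iota (mu x y) = mu y x).

Definition is_beta_morph (G : Locale) (X X' : Type)
    (mu : X -> X -> G) (mu' : X' -> X' -> G) (f : X -> X') : Prop :=
  forall a b, L_le (mu a b) (mu' (f a) (f b)).

Definition beta_jmonic (G : Locale) w e iota (X X' S : Type)
    (sigma : S -> S -> G) (f : S -> X) (g : S -> X') : Prop :=
  forall (T : Type) (tau : T -> T -> G) (h k : T -> S),
    is_action G w e iota T tau ->
    is_beta_morph G T S tau sigma h -> is_beta_morph G T S tau sigma k ->
    (forall t, f (h t) = f (k t) /\ g (h t) = g (k t)) ->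
    forall t, h t = k t.

Definition is_beta_rel_span (G : Locale) w e iota (X X' : Type)
    (mu : X -> X -> G) (mu' : X' -> X' -> G)
    (S : Type) (sigma : S -> S -> G) (f : S -> X) (g : S -> X') : Prop :=
  is_action G w e iota S sigma /\
  is_beta_morph G S X sigma mu f /\ is_beta_morph G S X' sigma mu' g /\
  beta_jmonic G w e iota X X' S sigma f g.

(* Rel(F) sends a span to its image relation in X × X'. *)
Definition span_image {X X' S : Type} (f : S -> X) (g : S -> X') : X -> X' -> Prop :=
  fun x x' => exists s, f s = x /\ g s = x'.

(* Two spans represent the same morphism of Rel(beta^G) iff isomorphic. *)
Definition beta_spans_iso (G : Locale) (X X' : Type)
    (S : Type) (sigma : S -> S -> G) (f : S -> X) (g : S -> X')
    (S' : Type) (sigma' : S' -> S' -> G) (f' : S' -> X) (g' : S' -> X') : Prop :=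
  exists (phi : S -> S') (psi : S' -> S),
    is_beta_morph G S S' sigma sigma' phi /\ is_beta_morph G S' S sigma' sigma psi /\
    (forall s, psi (phi s) = s) /\ (forall s', phi (psi s') = s') /\
    (forall s, f' (phi s) = f s /\ g' (phi s) = g s).

(* Main.v *)
Require Import Defs.
From Stdlib Require Import Classical ProofIrrelevance IndefiniteDescription.

Lemma meet_l {G : Locale} (a b : G) : L_le (L_meet a b) a.
Proof. exact (proj1 (proj1 (L_meet_glb G a b _) (L_le_refl G _))). Qed.
Lemma meet_r {G : Locale} (a b : G) : L_le (L_meet a b) b.
Proof. exact (proj2 (proj1 (L_meet_glb G a b _) (L_le_refl G _))). Qed.
Lemma meet_intro {G : Locale} (a b c : G) : L_le c a -> L_le c b -> L_le c (L_meet a b).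
Proof. intros; apply L_meet_glb; auto. Qed.
Lemma le_tr {G : Locale} (a b c : G) : L_le a b -> L_le b c -> L_le a c.
Proof. apply L_le_trans. Qed.
Lemma meet_comm {G : Locale} (a b : G) : L_meet a b = L_meet b a.
Proof. apply L_le_antisym; apply meet_intro; (apply meet_l || apply meet_r). Qed.
Lemma meet_idem {G : Locale} (a : G) : L_meet a a = a.
Proof. apply L_le_antisym. apply meet_l. apply meet_intro; apply L_le_refl. Qed.
Lemma meet_mono {G : Locale} (a a' b b' : G) :
  L_le a a' -> L_le b b' -> L_le (L_meet a b) (L_meet a' b').
Proof. intros; apply meet_intro. eapply le_tr; [apply meet_l|auto]. eapply le_tr; [apply meet_r|auto]. Qed.
Lemma le_sup {G : Locale} (U : G -> Prop) a b : U a -> L_le b a -> L_le b (L_sup U).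
Proof. intros; eapply le_tr; eauto. apply L_sup_ub; auto. Qed.
Lemma bot_le {G : Locale} (a : G) : L_le (L_bot G) a.
Proof. apply L_sup_least; intros _ []. Qed.
Lemma le_bot_eq {G : Locale} (a : G) : L_le a (L_bot G) -> a = L_bot G.
Proof. intros; apply L_le_antisym; auto using bot_le. Qed.
Lemma top_meet {G : Locale} (a : G) : L_le a (L_meet a L_top).
Proof. apply meet_intro. apply L_le_refl. apply L_top_greatest. Qed.
Lemma meet_sup_le_r {G : Locale} (a : G) U c :
  (forall u, U u -> L_le (L_meet a u) c) -> L_le (L_meet a (L_sup U)) c.
Proof. intros H; rewrite L_distr; apply L_sup_least; intros y [u [Hu ->]]; auto. Qed.
Lemma meet_sup_le_l {G : Locale} (b : G) U c :
  (forall u, U u -> L_le (L_meet u b) c) -> L_le (L_meet (L_sup U) b) c.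
Proof. intros H; rewrite meet_comm; apply meet_sup_le_r; intros; rewrite meet_comm; auto. Qed.
Lemma sup_ext {G : Locale} (U V : G -> Prop) : (forall y, U y <-> V y) -> L_sup U = L_sup V.
Proof. intros H; apply L_le_antisym; apply L_sup_least; intros; apply L_sup_ub; apply H; auto. Qed.
Lemma meet_sup_l {G : Locale} (U : G -> Prop) c :
  L_meet (L_sup U) c = L_sup (fun y => exists u, U u /\ y = L_meet u c).
Proof. rewrite meet_comm, L_distr; apply sup_ext; intros y; split;
  intros [u [Hu ->]]; exists u; split; auto; apply meet_comm. Qed.
Lemma meet_sup_r {G : Locale} (U : G -> Prop) c :
  L_meet c (L_sup U) = L_sup (fun y => exists u, U u /\ y = L_meet c u).
Proof. apply L_distr. Qed.

Lemma cl2_incl {G : Locale} (R : G -> G -> Prop) a b : R a b -> cl2 G R a b.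
Proof. intros H S _ HR; auto. Qed.
Lemma cl2_ideal {G : Locale} (R : G -> G -> Prop) : tideal2 G (cl2 G R).
Proof.
  split; [|split].
  - intros a b a' b' H h1 h2 S HS HR. apply (proj1 HS a b); auto. apply H; auto.
  - intros U b H S HS HR. apply (proj1 (proj2 HS)); intros; apply H; auto.
  - intros a U H S HS HR. apply (proj2 (proj2 HS)); intros; apply H; auto.
Qed.
Lemma cl2_min {G : Locale} (R S : G -> G -> Prop) :
  tideal2 G S -> (forall a b, R a b -> S a b) -> forall a b, cl2 G R a b -> S a b.
Proof. intros HS HR a b H; apply H; auto. Qed.
Lemma ideal_bot_l {G : Locale} (S : G -> G -> Prop) : tideal2 G S -> forall b, S (L_bot G) b.
Proof. intros HS b; apply (proj1 (proj2 HS)); intros _ []. Qed.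

Definition P12 {G : Locale} (P1 P2 : G -> G -> Prop) (a b : G) : Prop :=
  exists p1 p2 q1 q2, P1 p1 p2 /\ P2 q1 q2 /\ a = L_meet p1 q1 /\ b = L_meet p2 q2.

Lemma ideal_mul_r {G : Locale} (Q : G -> G -> Prop) (c d : G) :
  tideal2 G Q -> tideal2 G (fun a b => Q (L_meet a c) (L_meet b d)).
Proof.
  intros HQ; split; [|split].
  - intros a b a' b' H h1 h2. apply (proj1 HQ _ _ _ _ H); apply meet_mono; auto; apply L_le_refl.
  - intros U b H. rewrite meet_sup_l. apply (proj1 (proj2 HQ)). intros y [u [Hu ->]]; auto.
  - intros a U H. rewrite meet_sup_l. apply (proj2 (proj2 HQ)). intros y [u [Hu ->]]; auto.
Qed.
Lemma ideal_mul_l {G : Locale} (Q : G -> G -> Prop) (a b : G) :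
  tideal2 G Q -> tideal2 G (fun c d => Q (L_meet a c) (L_meet b d)).
Proof.
  intros HQ; split; [|split].
  - intros c d c' d' H h1 h2. apply (proj1 HQ _ _ _ _ H); apply meet_mono; auto; apply L_le_refl.
  - intros U d H. rewrite meet_sup_r. apply (proj1 (proj2 HQ)). intros y [u [Hu ->]]; auto.
  - intros c U H. rewrite meet_sup_r. apply (proj2 (proj2 HQ)). intros y [u [Hu ->]]; auto.
Qed.

Lemma cl2_inter {G : Locale} (P1 P2 : G -> G -> Prop) a b :
  cl2 G P1 a b -> cl2 G P2 a b -> cl2 G (P12 P1 P2) a b.
Proof.
  intros H1 H2.
  set (Q := cl2 G (P12 P1 P2)).
  assert (HQ : tideal2 G Q) by apply cl2_ideal.
  assert (St : forall a b, cl2 G P1 a b -> forall c d, P2 c d -> Q (L_meet a c) (L_meet b d)).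
  { apply (cl2_min P1 (fun a b : G => forall c d : G, P2 c d -> Q (L_meet a c) (L_meet b d))).
    - split; [|split].
      + intros a0 b0 a' b' H h1 h2 c d Hcd. apply (proj1 (ideal_mul_r Q c d HQ) a0 b0); auto.
      + intros U b0 H c d Hcd. apply (proj1 (proj2 (ideal_mul_r Q c d HQ))); intros; apply H; auto.
      + intros a0 U H c d Hcd. apply (proj2 (proj2 (ideal_mul_r Q c d HQ))); intros; apply H; auto.
    - intros p1 p2 Hp c d Hcd. apply cl2_incl. exists p1, p2, c, d; auto. }
  assert (St2 : Q (L_meet a a) (L_meet b b)).
  { apply (cl2_min P2 (fun c d => Q (L_meet a c) (L_meet b d))); auto.
    apply ideal_mul_l; auto. }
  rewrite !meet_idem in St2; auto.
Qed.

Lemma le_meet_eq {G : Locale} (a b : G) : L_le a b -> L_meet a b = a.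
Proof. intros; apply L_le_antisym. apply meet_l. apply meet_intro; auto; apply L_le_refl. Qed.

Lemma iota_mono {G : Locale} w e iota (HG : IsLocalicGroup G w e iota) (a b : G) :
  L_le a b -> L_le (iota a) (iota b).
Proof. intros H. rewrite <- (le_meet_eq a b H), (iota_meet _ _ _ _ HG). apply meet_r. Qed.

Lemma cl2_hl_bound {G : Locale} w e iota (HG : IsLocalicGroup G w e iota)
  (R : G -> G -> Prop) (c : G) :
  (forall a b, R a b -> L_le (L_meet (iota a) b) c) ->
  forall a b, cl2 G R a b -> L_le (L_meet (iota a) b) c.
Proof.
  intros HR. apply (cl2_min R (fun a b => L_le (L_meet (iota a) b) c)); auto.
  split; [|split].
  - intros a b a' b' H h1 h2. eapply le_tr; [|exact H]. apply meet_mono; auto.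
    eapply iota_mono; eauto.
  - intros U b H. rewrite (iota_sup _ _ _ _ HG). apply meet_sup_le_l. intros y [u [Hu ->]]; auto.
  - intros a U H. apply meet_sup_le_r. auto.
Qed.

Lemma cl2_hr_bound {G : Locale} w e iota (HG : IsLocalicGroup G w e iota)
  (R : G -> G -> Prop) (c : G) :
  (forall a b, R a b -> L_le (L_meet a (iota b)) c) ->
  forall a b, cl2 G R a b -> L_le (L_meet a (iota b)) c.
Proof.
  intros HR. apply (cl2_min R (fun a b => L_le (L_meet a (iota b)) c)); auto.
  split; [|split].
  - intros a b a' b' H h1 h2. eapply le_tr; [|exact H]. apply meet_mono; auto.
    eapply iota_mono; eauto.
  - intros U b H. apply meet_sup_le_l. auto.
  - intros a U H. rewrite (iota_sup _ _ _ _ HG). apply meet_sup_le_r. intros y [u [Hu ->]]; auto.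
Qed.

Section dummy. End dummy.

Lemma coaction_action {G : Locale} w e iota (HG : IsLocalicGroup G w e iota)
  (X : Type) (A : X -> X -> G) : is_coaction G w e X A -> is_action G w e iota X A.
Proof.
  intros [Hw He].
  assert (Hgen : forall x y z, w (A x z) (A x y) (A y z)).
  { intros x y z. apply Hw. apply cl2_incl. exists y; auto. }
  assert (alb : forall x y z, x <> z -> L_meet (iota (A x y)) (A y z) = L_bot G).
  { intros x y z Hxz. apply le_bot_eq.
    eapply le_tr; [eapply (le_sup (fun x0 => exists a b, w (A x z) a b /\ x0 = L_meet (iota a) b)); [exists (A x y), (A y z); split; [apply Hgen|reflexivity]|apply L_le_refl]|].
    rewrite (antipode_l _ _ _ _ HG). apply L_sup_least. intros v [H _].
    apply He in H; contradiction. }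
  assert (arb : forall x y z, x <> z -> L_meet (A x y) (iota (A y z)) = L_bot G).
  { intros x y z Hxz. apply le_bot_eq.
    eapply le_tr; [eapply (le_sup (fun x0 => exists a b, w (A x z) a b /\ x0 = L_meet a (iota b))); [exists (A x y), (A y z); split; [apply Hgen|reflexivity]|apply L_le_refl]|].
    rewrite (antipode_r _ _ _ _ HG). apply L_sup_least. intros v [H _].
    apply He in H; contradiction. }
  assert (alt : forall x, L_le L_top (L_sup (fun g => exists u, g = L_meet (iota (A x u)) (A u x)))).
  { intros x. eapply le_tr.
    - apply (le_sup (fun y => e (A x x) /\ y = L_top) L_top). split; [apply He; auto|auto].
      apply L_le_refl.
    - rewrite <- (antipode_l _ _ _ _ HG). apply L_sup_least. intros g [a [b [Hab ->]]].
      apply Hw in Hab. revert a b Hab. apply (cl2_hl_bound _ _ _ HG).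
      intros a b [y [-> ->]]. apply L_sup_ub. exists y; auto. }
  assert (art : forall x, L_le L_top (L_sup (fun g => exists u, g = L_meet (A x u) (iota (A u x))))).
  { intros x. eapply le_tr.
    - apply (le_sup (fun y => e (A x x) /\ y = L_top) L_top). split; [apply He; auto|auto].
      apply L_le_refl.
    - rewrite <- (antipode_r _ _ _ _ HG). apply L_sup_least. intros g [a [b [Hab ->]]].
      apply Hw in Hab. revert a b Hab. apply (cl2_hr_bound _ _ _ HG).
      intros a b [y [-> ->]]. apply L_sup_ub. exists y; auto. }
  assert (iA : forall x y, iota (A y x) = A x y).
  { intros x y. apply L_le_antisym.
    - eapply le_tr; [apply top_meet|]. eapply le_tr; [apply meet_mono; [apply L_le_refl|apply (art x)]|].
      apply meet_sup_le_r. intros g [u ->].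
      destruct (classic (u = y)) as [->|Hne].
      + eapply le_tr; [apply meet_r|apply meet_l].
      + eapply le_tr; [apply meet_mono; [apply L_le_refl|apply meet_l]|].
        rewrite (alb y x u); auto. apply bot_le.
    - eapply le_tr; [apply top_meet|]. eapply le_tr; [apply meet_mono; [apply L_le_refl|apply (alt y)]|].
      apply meet_sup_le_r. intros g [u ->].
      destruct (classic (u = x)) as [->|Hne].
      + eapply le_tr; [apply meet_r|apply meet_l].
      + eapply le_tr; [apply meet_mono; [apply L_le_refl|apply meet_l]|].
        rewrite (arb x y u); auto. apply bot_le. }
  split; [|split; [|split]].
  - split; [|split; [|split]].
    + intros x. apply L_le_antisym; [apply L_top_greatest|].
      eapply le_tr; [apply (art x)|]. apply L_sup_least. intros g [u ->].
      eapply le_sup; [exists u; reflexivity|apply meet_l].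
    + intros x y1 y2 H. rewrite <- (iA x y1). apply alb; auto.
    + intros y. apply L_le_antisym; [apply L_top_greatest|].
      eapply le_tr; [apply (alt y)|]. apply L_sup_least. intros g [u ->].
      eapply le_sup; [exists u; reflexivity|apply meet_r].
    + intros x1 x2 y H. rewrite <- (iA x2 y). apply arb; auto.
  - exact Hw.
  - exact He.
  - intros x y. apply iA.
Qed.

Definition PT (X X' : Type) (P : X -> X' -> Prop) := {p : X * X' | P (fst p) (snd p)}.
Definition sigmaP {G : Locale} {X X' : Type} {P : X -> X' -> Prop}
  (mu : X -> X -> G) (mu' : X' -> X' -> G) (p q : PT X X' P) : G :=
  L_meet (mu (fst (proj1_sig p)) (fst (proj1_sig q))) (mu' (snd (proj1_sig p)) (snd (proj1_sig q))).

Lemma PT_eq {X X' : Type} {P : X -> X' -> Prop} (p q : PT X X' P) :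
  fst (proj1_sig p) = fst (proj1_sig q) -> snd (proj1_sig p) = snd (proj1_sig q) -> p = q.
Proof.
  destruct p as [[a b] Hp], q as [[c d] Hq]; simpl; intros -> ->.
  f_equal; apply proof_irrelevance.
Qed.

Lemma prod_action {G : Locale} w e iota (HG : IsLocalicGroup G w e iota)
  (X X' : Type) (mu : X -> X -> G) (mu' : X' -> X' -> G) (P : X -> X' -> Prop) :
  is_action G w e iota X mu -> is_action G w e iota X' mu' ->
  (forall x x' z z', P x x' -> ~ P z z' -> L_meet (mu x z) (mu' x' z') = L_bot G) ->
  (forall x x' z z', P z z' -> ~ P x x' -> L_meet (mu x z) (mu' x' z') = L_bot G) ->
  is_action G w e iota (PT X X' P) (sigmaP mu mu').
Proof.
  intros [[Hr1 [Hd1 [Hc1 Hcd1]]] [Hw1 [He1 Hi1]]] [[Hr2 [Hd2 [Hc2 Hcd2]]] [Hw2 [He2 Hi2]]] H1 H2.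
  split; [|split; [|split]].
  - split; [|split; [|split]].
    + intros [[x x'] Hp]. apply L_le_antisym; [apply L_top_greatest|].
      rewrite <- (Hr1 x). apply L_sup_least. intros g [z ->].
      eapply le_tr; [apply top_meet|]. rewrite <- (Hr2 x').
      apply meet_sup_le_r. intros g [z' ->].
      destruct (classic (P z z')) as [Hz|Hz].
      * eapply le_sup; [exists (exist _ (z, z') Hz); reflexivity|apply L_le_refl].
      * rewrite (H1 x x' z z'); auto. apply bot_le.
    + intros p q1 q2 Hne. apply le_bot_eq.
      destruct (classic (fst (proj1_sig q1) = fst (proj1_sig q2))) as [E1|E1].
      * destruct (classic (snd (proj1_sig q1) = snd (proj1_sig q2))) as [E2|E2].
        -- exfalso; apply Hne, PT_eq; auto.
        -- rewrite <- (Hd2 (snd (proj1_sig p)) _ _ E2). unfold sigmaP; apply meet_mono; apply meet_r.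
      * rewrite <- (Hd1 (fst (proj1_sig p)) _ _ E1). unfold sigmaP; apply meet_mono; apply meet_l.
    + intros [[x x'] Hp]. apply L_le_antisym; [apply L_top_greatest|].
      rewrite <- (Hc1 x). apply L_sup_least. intros g [z ->].
      eapply le_tr; [apply top_meet|]. rewrite <- (Hc2 x').
      apply meet_sup_le_r. intros g [z' ->].
      destruct (classic (P z z')) as [Hz|Hz].
      * eapply le_sup; [exists (exist _ (z, z') Hz); reflexivity|apply L_le_refl].
      * rewrite (H2 z z' x x'); auto. apply bot_le.
    + intros q1 q2 p Hne. apply le_bot_eq.
      destruct (classic (fst (proj1_sig q1) = fst (proj1_sig q2))) as [E1|E1].
      * destruct (classic (snd (proj1_sig q1) = snd (proj1_sig q2))) as [E2|E2].
        -- exfalso; apply Hne, PT_eq; auto.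
        -- rewrite <- (Hcd2 _ _ (snd (proj1_sig p)) E2). unfold sigmaP; apply meet_mono; apply meet_r.
      * rewrite <- (Hcd1 _ _ (fst (proj1_sig p)) E1). unfold sigmaP; apply meet_mono; apply meet_l.
  - intros [[x x'] Hp] [[y y'] Hq] a b. unfold sigmaP; simpl.
    pose proof (w_meet _ _ _ _ HG (mu x y) (mu' x' y') a b) as WM. split.
    + intros H0. apply WM in H0. destruct H0 as [Ha Hb]. apply Hw1 in Ha. apply Hw2 in Hb.
      generalize (cl2_inter _ _ _ _ Ha Hb). apply cl2_min; [apply cl2_ideal|].
      intros c d [p1 [p2 [q1 [q2 [[z [-> ->]] [[z' [-> ->]] [-> ->]]]]]]].
      destruct (classic (P z z')) as [Hz|Hz].
      * apply cl2_incl. exists (exist _ (z, z') Hz). simpl. auto.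
      * rewrite (H1 x x' z z'); auto. apply ideal_bot_l, cl2_ideal.
    + intros Hab. apply WM. clear WM. split.
      * apply Hw1. revert a b Hab. apply cl2_min; [apply cl2_ideal|].
        intros a b [[[z z'] Hz] [-> ->]]. simpl.
        apply (proj1 (cl2_ideal _) (mu x z) (mu z y)); [apply cl2_incl; exists z; auto|apply meet_l|apply meet_l].
      * apply Hw2. revert a b Hab. apply cl2_min; [apply cl2_ideal|].
        intros a b [[[z z'] Hz] [-> ->]]. simpl.
        apply (proj1 (cl2_ideal _) (mu' x' z') (mu' z' y')); [apply cl2_incl; exists z'; auto|apply meet_r|apply meet_r].
  - intros p q. unfold sigmaP. rewrite (e_meet _ _ _ _ HG), He1, He2. split.
    + intros [E1 E2]; apply PT_eq; auto.
    + intros ->; auto.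
  - intros p q. unfold sigmaP. rewrite (iota_meet _ _ _ _ HG), Hi1, Hi2. reflexivity.
Qed.

Lemma comod_to_span {G : Locale} w e iota (HG : IsLocalicGroup G w e iota)
  (X X' : Type) (A : X -> X -> G) (A' : X' -> X' -> G) (R : X -> X' -> Prop) :
  is_action G w e iota X A -> is_action G w e iota X' A' ->
  is_comod_morph G X X' A A' R ->
  exists (S : Type) (sigma : S -> S -> G) (f : S -> X) (g : S -> X'),
    is_beta_rel_span G w e iota X X' A A' S sigma f g /\
    (forall x x', R x x' <-> span_image f g x x').
Proof.
  intros HA HA' Hcm.
  pose proof HA as [[Hr1 [Hd1 [Hc1 Hcd1]]] _].
  pose proof HA' as [[Hr2 [Hd2 [Hc2 Hcd2]]] _].
  exists (PT X X' R), (sigmaP A A'), (fun p => fst (proj1_sig p)), (fun p => snd (proj1_sig p)).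
  split; [split; [|split; [|split]]|].
  - apply (prod_action _ _ _ HG); auto.
    + intros x x' z z' Hx Hz. apply le_bot_eq.
      eapply le_tr; [apply meet_mono; [apply L_le_refl|]|].
      { apply (le_sup (fun g => exists x'', R x x'' /\ g = A' x'' z') (A' x' z')); [exists x'; auto|apply L_le_refl]. }
      rewrite (Hcm x z'). apply meet_sup_le_r. intros g [v [Hv ->]].
      rewrite (Hd1 x z v); [apply L_le_refl|]. intros ->; contradiction.
    + intros x x' z z' Hz Hx. apply le_bot_eq.
      eapply le_tr; [apply meet_mono; [|apply L_le_refl]|].
      { apply (le_sup (fun g => exists y, R y z' /\ g = A x y) (A x z)); [exists z; auto|apply L_le_refl]. }
      rewrite <- (Hcm x z'). apply meet_sup_le_l. intros g [u [Hu ->]].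
      rewrite (Hcd2 u x' z'); [apply L_le_refl|]. intros ->; contradiction.
  - intros a b. apply meet_l.
  - intros a b. apply meet_r.
  - intros T tau h k _ _ _ Heq t. destruct (Heq t). apply PT_eq; auto.
  - intros x x'. split.
    + intros H. exists (exist _ (x, x') H). auto.
    + intros [[[a b] H] [E1 E2]]. simpl in *. subst; auto.
Qed.

Lemma span_to_comod {G : Locale} w e iota
  (X X' : Type) (A : X -> X -> G) (A' : X' -> X' -> G) (R : X -> X' -> Prop)
  (S : Type) (sigma : S -> S -> G) (f : S -> X) (g : S -> X') :
  is_action G w e iota X A -> is_action G w e iota X' A' ->
  is_beta_rel_span G w e iota X X' A A' S sigma f g ->
  (forall x x', R x x' <-> span_image f g x x') ->
  is_comod_morph G X X' A A' R.
Proof.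
  intros [[Hr1 [Hd1 [Hc1 Hcd1]]] _] [[Hr2 [Hd2 [Hc2 Hcd2]]] _]
    [[[Hrs [Hds [Hcs Hcds]]] _] [Hf [Hg _]]] HR x y'.
  apply L_le_antisym; apply L_sup_least.
  - intros v [x' [Hx ->]]. apply HR in Hx. destruct Hx as [s [<- <-]].
    eapply le_tr; [apply top_meet|]. rewrite <- (Hrs s). apply meet_sup_le_r.
    intros v [t ->].
    destruct (classic (g t = y')) as [<-|Hne].
    + eapply le_sup; [exists (f t); split; [apply HR; exists t; auto|reflexivity]|].
      eapply le_tr; [apply meet_r|apply Hf].
    + eapply le_tr; [|apply bot_le]. rewrite <- (Hd2 (g s) y' (g t)); auto. apply meet_mono; [apply L_le_refl|apply Hg].
  - intros v [y [Hy ->]]. apply HR in Hy. destruct Hy as [s [<- <-]].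
    eapply le_tr; [apply top_meet|]. rewrite <- (Hcs s). apply meet_sup_le_r.
    intros v [t ->].
    destruct (classic (f t = x)) as [<-|Hne].
    + eapply le_sup; [exists (g t); split; [apply HR; exists t; auto|reflexivity]|].
      eapply le_tr; [apply meet_r|apply Hg].
    + eapply le_tr; [|apply bot_le]. rewrite <- (Hcd1 x (f t) (f s)); auto. apply meet_mono; [apply L_le_refl|apply Hf].
Qed.

Lemma span_inj {G : Locale} w e iota (HG : IsLocalicGroup G w e iota)
  (X X' : Type) (A : X -> X -> G) (A' : X' -> X' -> G)
  (S : Type) (sigma : S -> S -> G) (f : S -> X) (g : S -> X') :
  is_action G w e iota X A -> is_action G w e iota X' A' ->
  is_beta_rel_span G w e iota X X' A A' S sigma f g ->
  forall s1 s2, f s1 = f s2 -> g s1 = g s2 -> s1 = s2.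
Proof.
  intros HA HA' [Hs [Hf [Hg Hj]]].
  pose proof HA as [[Hr1 [Hd1 [Hc1 Hcd1]]] _].
  pose proof HA' as [[Hr2 [Hd2 [Hc2 Hcd2]]] _].
  set (P := fun s1 s2 => f s1 = f s2 /\ g s1 = g s2).
  assert (HT : is_action G w e iota (PT S S P) (sigmaP sigma sigma)).
  { apply (prod_action _ _ _ HG); auto.
    - intros x x' z z' [E1 E2] Hz. apply le_bot_eq.
      destruct (classic (f z = f z')) as [F|F].
      + destruct (classic (g z = g z')) as [F'|F']; [exfalso; apply Hz; split; auto|].
        rewrite <- (Hd2 (g x) (g z) (g z') F'). apply meet_mono; [apply Hg|rewrite E2; apply Hg].
      + rewrite <- (Hd1 (f x) (f z) (f z') F). apply meet_mono; [apply Hf|rewrite E1; apply Hf].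
    - intros x x' z z' [E1 E2] Hz. apply le_bot_eq.
      destruct (classic (f x = f x')) as [F|F].
      + destruct (classic (g x = g x')) as [F'|F']; [exfalso; apply Hz; split; auto|].
        rewrite <- (Hcd2 (g x) (g x') (g z) F'). apply meet_mono; [apply Hg|rewrite E2; apply Hg].
      + rewrite <- (Hcd1 (f x) (f x') (f z) F). apply meet_mono; [apply Hf|rewrite E1; apply Hf]. }
  intros s1 s2 E1 E2.
  refine (Hj (PT S S P) (sigmaP sigma sigma) (fun p => fst (proj1_sig p)) (fun p => snd (proj1_sig p))
            HT _ _ _ (exist _ (s1, s2) (conj E1 E2))).
  - intros a b. apply meet_l.
  - intros a b. apply meet_r.
  - intros [[a b] [F1 F2]]. simpl. auto.
Qed.

Lemma span_bound {G : Locale} w e iota (HG : IsLocalicGroup G w e iota)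
  (X X' : Type) (A : X -> X -> G) (A' : X' -> X' -> G)
  (S : Type) (sigma : S -> S -> G) (f : S -> X) (g : S -> X') :
  is_action G w e iota X A -> is_action G w e iota X' A' ->
  is_beta_rel_span G w e iota X X' A A' S sigma f g ->
  forall a b, L_le (L_meet (A (f a) (f b)) (A' (g a) (g b))) (sigma a b).
Proof.
  intros HA HA' Hsp. pose proof (span_inj _ _ _ HG _ _ _ _ _ _ _ _ HA HA' Hsp) as Hinj.
  destruct Hsp as [[[Hrs _] _] [Hf [Hg _]]].
  pose proof HA as [[Hr1 [Hd1 [Hc1 Hcd1]]] _].
  pose proof HA' as [[Hr2 [Hd2 [Hc2 Hcd2]]] _].
  intros a b. eapply le_tr; [apply top_meet|]. rewrite <- (Hrs a). apply meet_sup_le_r.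
  intros v [u ->].
  destruct (classic (f u = f b)) as [F|F].
  - destruct (classic (g u = g b)) as [F'|F'].
    + rewrite (Hinj u b F F'). apply meet_r.
    + eapply le_tr; [|apply bot_le]. rewrite <- (Hd2 (g a) (g b) (g u)); auto.
      apply meet_mono; [apply meet_r|apply Hg].
  - eapply le_tr; [|apply bot_le]. rewrite <- (Hd1 (f a) (f b) (f u)); auto.
    apply meet_mono; [apply meet_l|apply Hf].
Qed.

Theorem mainTheorem8 (G : Locale) (w : G -> G -> G -> Prop) (e : G -> Prop)
  (iota : G -> G) (HG : IsLocalicGroup G w e iota) :
  exists Phi : forall X : Type, (X -> X -> G) -> (X -> X -> G),
    (* object part: over each set X, a bijection between coactions on l X
       and actions on X (so the triangle commutes on objects) *)
    (forall (X : Type) (rho : X -> X -> G),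
        is_coaction G w e X rho -> is_action G w e iota X (Phi X rho)) /\
    (forall (X : Type) (rho1 rho2 : X -> X -> G),
        is_coaction G w e X rho1 -> is_coaction G w e X rho2 ->
        Phi X rho1 = Phi X rho2 -> rho1 = rho2) /\
    (forall (X : Type) (mu : X -> X -> G),
        is_action G w e iota X mu ->
        exists rho, is_coaction G w e X rho /\ Phi X rho = mu) /\
    (* morphism part: a relation R ⊆ X × X' (= linear map l X -> l X') is a
       comodule morphism iff it is (the image under Rel(F) of) a relation
       of beta^G between the corresponding objects *)
    (forall (X X' : Type) (rho : X -> X -> G) (rho' : X' -> X' -> G)
            (R : X -> X' -> Prop),
        is_coaction G w e X rho -> is_coaction G w e X' rho' ->
        (is_comod_morph G X X' rho rho' R <->
         exists (S : Type) (sigma : S -> S -> G) (f : S -> X) (g : S -> X'),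
           is_beta_rel_span G w e iota X X' (Phi X rho) (Phi X' rho') S sigma f g /\
           (forall x x', R x x' <-> span_image f g x x'))) /\
    (* Rel(F) is injective on morphisms of Rel(beta^G) *)
    (forall (X X' : Type) (mu : X -> X -> G) (mu' : X' -> X' -> G)
            (S : Type) (sigma : S -> S -> G) (f : S -> X) (g : S -> X')
            (S' : Type) (sigma' : S' -> S' -> G) (f' : S' -> X) (g' : S' -> X'),
        is_action G w e iota X mu -> is_action G w e iota X' mu' ->
        is_beta_rel_span G w e iota X X' mu mu' S sigma f g ->
        is_beta_rel_span G w e iota X X' mu mu' S' sigma' f' g' ->
        (forall x x', span_image f g x x' <-> span_image f' g' x x') ->
        beta_spans_iso G X X' S sigma f g S' sigma' f' g').
Proof.
  exists (fun X rho => rho).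
  split; [|split; [|split; [|split]]].
  - intros X rho H. apply (coaction_action _ _ _ HG); auto.
  - intros X r1 r2 _ _ E; exact E.
  - intros X mu [_ [Hw [He _]]]. exists mu; split; [split; auto|reflexivity].
  - intros X X' rho rho' R H1 H2.
    pose proof (coaction_action _ _ _ HG _ _ H1) as A1.
    pose proof (coaction_action _ _ _ HG _ _ H2) as A2.
    split.
    + intros Hm. apply (comod_to_span _ _ _ HG); auto.
    + intros [S [sigma [f [g [Hs HR]]]]]. eapply span_to_comod; eauto.
  - intros X X' mu mu' S sigma f g S' sigma' f' g' HA HA' Hs Hs' Him.
    pose proof (span_inj _ _ _ HG _ _ _ _ _ _ _ _ HA HA' Hs) as I1.
    pose proof (span_inj _ _ _ HG _ _ _ _ _ _ _ _ HA HA' Hs') as I2.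
    pose proof (span_bound _ _ _ HG _ _ _ _ _ _ _ _ HA HA' Hs) as B1.
    pose proof (span_bound _ _ _ HG _ _ _ _ _ _ _ _ HA HA' Hs') as B2.
    assert (phiE : forall s, {s' : S' | f' s' = f s /\ g' s' = g s}).
    { intros s. apply constructive_indefinite_description.
      destruct (proj1 (Him (f s) (g s)) (ex_intro _ s (conj eq_refl eq_refl))) as [s' [E1 E2]].
      exists s'; auto. }
    assert (psiE : forall s', {s : S | f s = f' s' /\ g s = g' s'}).
    { intros s'. apply constructive_indefinite_description.
      destruct (proj2 (Him (f' s') (g' s')) (ex_intro _ s' (conj eq_refl eq_refl))) as [s [E1 E2]].
      exists s; auto. }
    destruct Hs as [_ [Hf [Hg _]]]. destruct Hs' as [_ [Hf' [Hg' _]]].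
    exists (fun s => proj1_sig (phiE s)), (fun s' => proj1_sig (psiE s')).
    split; [|split; [|split; [|split]]].
    + intros a b. destruct (phiE a) as [a' [Ea Fa]], (phiE b) as [b' [Eb Fb]]; simpl.
      eapply le_tr; [|apply B2]. rewrite Ea, Fa, Eb, Fb. apply meet_intro; auto.
    + intros a b. destruct (psiE a) as [a' [Ea Fa]], (psiE b) as [b' [Eb Fb]]; simpl.
      eapply le_tr; [|apply B1]. rewrite Ea, Fa, Eb, Fb. apply meet_intro; auto.
    + intros s. destruct (phiE s) as [s' [E1 E2]]; simpl. destruct (psiE s') as [t [F1 F2]]; simpl.
      apply I1; congruence.
    + intros s'. destruct (psiE s') as [s [E1 E2]]; simpl. destruct (phiE s) as [t [F1 F2]]; simpl.
      apply I2; congruence.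
    + intros s. destruct (phiE s) as [s' [E1 E2]]; simpl. auto.
Qed.
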